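(* Suppose $\mathrm{char}(k)\ne 2$ ($k$ algebraically closed). Let $(V,q)$ be a non-degenerate quadratic space and let $(W,q')$ be a quadratic space of dimension at most $\aleph_0$. Then there is an embedding $W\to V$, i.e. a $k$-linear map $\phi:W\to V$ with $q\circ\phi=q'$.
   Context: A quadratic space is a $k$-vector space $V$ together with $q\in P_2(V)$, a degree-$2$ polynomial function on $V$ (in dual coordinates $x_i$ to a basis, a formal, possibly infinite, $k$-linear combination of degree-$2$ monomials). The strength of $q$ is the least $s$ with $q=\sum_{i=1}^s g_ih_i$ for linear forms $g_i,h_i\in P_1(V)$ ($\infty$ if none exists); $(V,q)$ is non-degenerate if $q$ has infinite strength. *)

(* Defs.v *)
From mathcomp Require Import all_boot all_algebra.
Set Implicit Arguments. Unset Strict Implicit. Unset Printing Implicit Defensive.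
Import GRing.Theory.
Local Open Scope ring_scope.

Definition qs_linear_form (k : fieldType) (V : lmodType k) (f : V -> k) : Prop :=
  forall (a : k) (u v : V), f (a *: u + v) = a * f u + f v.

Definition qs_bilinear_form (k : fieldType) (V : lmodType k) (B : V -> V -> k) : Prop :=
  (forall v, qs_linear_form (fun u => B u v)) /\ (forall u, qs_linear_form (B u)).

(* q is a degree-2 polynomial function on V, i.e. q in P_2(V): in dual
   coordinates x_i to a basis (e_i), q = sum_{i,j} c_ij x_i x_j (a formal,
   possibly infinite, combination).  Equivalently q(v) = B(v,v) for the
   bilinear form B(u,v) = sum c_ij x_i(u) x_j(v) (and conversely
   c_ij = B(e_i, e_j)). *)
Definition qs_quadratic (k : fieldType) (V : lmodType k) (q : V -> k) : Prop :=
  exists B : V -> V -> k, qs_bilinear_form B /\ forall v, q v = B v v.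

Definition qs_strength_le (k : fieldType) (V : lmodType k) (q : V -> k) (s : nat) : Prop :=
  exists g h : 'I_s -> V -> k,
    (forall i, qs_linear_form (g i)) /\ (forall i, qs_linear_form (h i)) /\
    forall v, q v = \sum_(i < s) g i v * h i v.

Definition qs_nondegenerate (k : fieldType) (V : lmodType k) (q : V -> k) : Prop :=
  forall s : nat, ~ qs_strength_le q s.

Definition qs_countable_dim (k : fieldType) (W : lmodType k) : Prop :=
  exists e : nat -> W, forall w : W, exists (n : nat) (c : 'I_n -> k),
    w = \sum_(i < n) c i *: e i.

(* Main.v *)
From HB Require Import structures.
Require Import Defs.
From mathcomp Require Import all_boot all_algebra.
From mathcomp Require Import ring zify.
From Stdlib Require Import ClassicalEpsilon Classical.
Set Implicit Arguments. Unset Strict Implicit. Unset Printing Implicit Defensive.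
Import GRing.Theory.
Local Open Scope ring_scope.

Definition mkLin (k : fieldType) (W V : lmodType k) (f : W -> V)
  (H : forall a u v, f (a *: u + v) = a *: f u + f v) : {linear W -> V}.
Proof.
pose m := GRing.isLinear.Build k W V *:%R f (fun a => fun u v => H a u v).
exact: (HB.pack f m).
Defined.

Lemma rec_choice (A : Type) (a0 : A) (Inv : nat -> (nat -> A) -> Prop) :
  Inv 0%N (fun _ => a0) ->
  (forall n p, Inv n p -> exists x, Inv n.+1 (fun i => if (i < n)%N then p i else x)) ->
  (forall n p p', (forall i, (i < n)%N -> p i = p' i) -> Inv n p -> Inv n p') ->
  exists s : nat -> A, forall n, Inv n s.
Proof.
move=> H0 HS Hext.
pose ch (n : nat) (p : nat -> A) :=
  epsilon (inhabits a0) (fun x => Inv n.+1 (fun i => if (i < n)%N then p i else x)).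
pose F := fix F (n : nat) : nat -> A :=
  match n with 0%N => fun _ => a0 | n'.+1 => fun i => if (i < n')%N then F n' i else ch n' (F n') end.
have HF : forall n, Inv n (F n).
  elim=> [//|n IH] /=.
  exact: (epsilon_spec (inhabits a0) _ (HS n _ IH)).
exists (fun i => F i.+1 i) => n.
apply: (Hext n (F n)) (HF n) => i.
elim: n => [//|n IH] lt_in /=.
case: ltnP => [lt|ge]; first exact: IH.
have -> : i = n by apply/eqP; rewrite eqn_leq ge -ltnS lt_in.
by rewrite /= ltnn.
Qed.

Section Lin.
Variables (k : fieldType) (V : lmodType k).

Lemma linf_add (f : V -> k) : qs_linear_form f -> forall u w, f (u + w) = f u + f w.
Proof. by move=> H u w; rewrite -[u]scale1r H mul1r scale1r. Qed.

Lemma linf0 (f : V -> k) : qs_linear_form f -> f 0 = 0.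
Proof.
move=> H; apply: (addrI (f 0)); by rewrite -linf_add // !addr0.
Qed.

Lemma linfZ (f : V -> k) : qs_linear_form f -> forall a u, f (a *: u) = a * f u.
Proof. by move=> H a u; rewrite -[a *: u]addr0 H linf0 // addr0. Qed.

Lemma linf_sum (f : V -> k) (I : Type) (r : seq I) (P : pred I) (c : I -> k) (y : I -> V) :
  qs_linear_form f ->
  f (\sum_(i <- r | P i) c i *: y i) = \sum_(i <- r | P i) c i * f (y i).
Proof.
move=> H; apply: (big_rec2 (fun a b => f a = b)); first exact: linf0.
by move=> i a b _ <-; rewrite H.
Qed.

Variable B : V -> V -> k.
Hypothesis HB : qs_bilinear_form B.

Definition bet u w := B u w + B w u.

Lemma betC u w : bet u w = bet w u.
Proof. by rewrite /bet addrC. Qed.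

Lemma bet_linl w : qs_linear_form (fun u => bet u w).
Proof.
case: HB => H1 H2 a u u'; rewrite /bet (H1 w) (H2 w); ring.
Qed.

Lemma bet_linr u : qs_linear_form (bet u).
Proof. by move=> a w w'; rewrite !(betC u); apply: bet_linl. Qed.

Lemma bet_suml (I : Type) (r : seq I) (P : pred I) (c : I -> k) (y : I -> V) w :
  bet (\sum_(i <- r | P i) c i *: y i) w = \sum_(i <- r | P i) c i * bet (y i) w.
Proof. exact: (linf_sum (f := fun u => bet u w)) (bet_linl w). Qed.

Lemma bet_sumr (I : Type) (r : seq I) (P : pred I) (c : I -> k) (y : I -> V) w :
  bet w (\sum_(i <- r | P i) c i *: y i) = \sum_(i <- r | P i) c i * bet w (y i).
Proof. exact: (linf_sum (f := bet w)) (bet_linr w). Qed.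

Lemma betDl u u' w : bet (u + u') w = bet u w + bet u' w.
Proof. exact: linf_add (bet_linl w) u u'. Qed.
Lemma betDr u u' w : bet w (u + u') = bet w u + bet w u'.
Proof. exact: linf_add (bet_linr w) u u'. Qed.
Lemma betZl a u w : bet (a *: u) w = a * bet u w.
Proof. exact: linfZ (bet_linl w) a u. Qed.
Lemma betZr a u w : bet w (a *: u) = a * bet w u.
Proof. exact: linfZ (bet_linr w) a u. Qed.
Lemma bet0l w : bet 0 w = 0.
Proof. exact: linf0 (bet_linl w). Qed.

Lemma BD u w : B (u + w) (u + w) = B u u + B w w + bet u w.
Proof.
case: HB => H1 H2; rewrite /bet.
rewrite (linf_add (H1 _)) !(linf_add (H2 _)); ring.
Qed.

Lemma BZ a u : B (a *: u) (a *: u) = a ^+ 2 * B u u.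
Proof.
case: HB => H1 H2.
rewrite (linfZ (H1 _)) (linfZ (H2 _)); ring.
Qed.

End Lin.

Lemma ltS_cases i m : (i < m.+1)%N -> (i < m)%N \/ i = m.
Proof. rewrite ltnS leq_eqVlt => /orP[/eqP->|]; by [right|left]. Qed.

Section Ortho.
Variables (k : closedFieldType) (V : lmodType k) (B : V -> V -> k).
Hypothesis HB : qs_bilinear_form B.
Hypothesis H2 : (2:k) != 0.

Local Notation bt := (bet B).

Lemma cancel2 (x y : k) : x + x = y + y -> x = y.
Proof.
move=> E; apply: (mulfI H2).
have e2 : forall z : k, 2 * z = z + z by move=> z; ring.
by rewrite !e2.
Qed.

Lemma kron N (v : nat -> V) (t : nat -> k) j :
  (forall i, (i < N)%N -> B (v i) (v i) = 1) ->
  (forall i l, (i < N)%N -> (l < N)%N -> i != l -> bt (v i) (v l) = 0) ->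
  (j < N)%N -> bt (\sum_(l < N) t l *: v l) (v j) = t j * 2.
Proof.
move=> H1 H0 jN; rewrite bet_suml // (bigD1 (Ordinal jN)) //= big1 => [|l ne].
  rewrite /bet H1 //; ring.
rewrite H0 ?mulr0 //.

Qed.

Lemma sumsq N (v : nat -> V) (t : nat -> k) :
  (forall i, (i < N)%N -> B (v i) (v i) = 1) ->
  (forall i l, (i < N)%N -> (l < N)%N -> i != l -> bt (v i) (v l) = 0) ->
  B (\sum_(l < N) t l *: v l) (\sum_(l < N) t l *: v l) = \sum_(l < N) t l ^+ 2.
Proof.
move=> H1 H0; apply: cancel2.
rewrite -big_split /=.
have -> : B (\sum_(l < N) t l *: v l) (\sum_(l < N) t l *: v l)
  + B (\sum_(l < N) t l *: v l) (\sum_(l < N) t l *: v l)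
  = bt (\sum_(l < N) t l *: v l) (\sum_(l < N) t l *: v l) by [].
rewrite bet_sumr //; apply: eq_bigr => l _.
rewrite kron //; ring.
Qed.

Lemma ortho_step (q : V -> k) (Hq : forall u, q u = B u u) (Hnd : qs_nondegenerate q)
  m (v : nat -> V) :
  (forall i, (i < m)%N -> B (v i) (v i) = 1) ->
  (forall i l, (i < m)%N -> (l < m)%N -> i != l -> bt (v i) (v l) = 0) ->
  exists u, B u u = 1 /\ forall j, (j < m)%N -> bt u (v j) = 0.
Proof.
move=> H1 H0.
pose l j w := bt w (v j) / 2.
pose P w := w - \sum_(j < m) l j w *: v j.
have HP : forall w j, (j < m)%N -> bt (P w) (v j) = 0.
  move=> w j jm; rewrite /P -scaleN1r betDl // betZl // (@kron m v (fun j => l j w) j) // /l divfK //; ring.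
case: (classic (exists w, B (P w) (P w) != 0)) => [[w nz] | nex].
  have [r Hr] := @solve_monicpoly k 2 (nth 0 [:: B (P w) (P w)]) isT.
  rewrite !big_ord_recl big_ord0 /= mul0r mulr1 !addr0 in Hr.
  have r0 : r != 0 by apply: contraNneq nz => r0; rewrite -Hr r0 expr0n.
  exists (r^-1 *: P w); split.
    by rewrite BZ // -Hr exprVn mulVf // expf_neq0.
  by move=> j jm; rewrite betZl // HP // mulr0.
exfalso; apply: (Hnd m).
have Z : forall w, B (P w) (P w) = 0.
  by move=> w'; case: (B (P w') (P w') =P 0) => // /eqP h; case: nex; exists w'.
have lin : forall j : 'I_m, qs_linear_form (l j).
  by move=> j a u w; rewrite /l (bet_linl HB) mulrDl mulrA.
exists (fun i w => l i w), (fun i w => l i w); split; first exact: lin.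
split; first exact: lin.
move=> w; rewrite Hq.
have E : bt (P w) (\sum_(j < m) l j w *: v j) = 0.
  rewrite bet_sumr // big1 // => j _; rewrite HP ?mulr0 //; exact: ltn_ord.
have Ew : w = P w + \sum_(j < m) l j w *: v j by rewrite /P subrK.
rewrite {1 2}Ew BD // Z add0r E addr0 (@sumsq m v (fun j => l j w)) //.
Qed.

Lemma ortho_seq (q : V -> k) (Hq : forall u, q u = B u u) (Hnd : qs_nondegenerate q) :
  exists v : nat -> V, (forall i, B (v i) (v i) = 1) /\
    (forall i j, i != j -> bt (v i) (v j) = 0).
Proof.
pose Inv m (v : nat -> V) := (forall i, (i < m)%N -> B (v i) (v i) = 1) /\
  (forall i l, (i < m)%N -> (l < m)%N -> i != l -> bt (v i) (v l) = 0).
have [v Hv] : exists v, forall m, Inv m v.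
  apply: (@rec_choice V 0 Inv).
  - by split.
  - move=> m p [H1 H0].
    have [u [Hu1 Hu0]] := ortho_step Hq Hnd H1 H0.
    exists u; split.
      move=> i /ltS_cases [im|->]; first by rewrite im; apply: H1.
      by rewrite ltnn.
    move=> i j /ltS_cases [im|->] /ltS_cases [jm|->]; rewrite ?ltnn ?im ?jm.
    + by apply: H0.
    + by move=> _; rewrite betC Hu0.
    + by move=> _; apply: Hu0.
    + by rewrite eqxx.
  - move=> m p p' E [H1 H0]; split.
      by move=> i im; rewrite -E // H1.
    by move=> i j im jm ij; rewrite -!E // H0.
exists v; split.
  by move=> i; case: (Hv i.+1) => H1 _; apply: H1.
move=> i j ij; case: (Hv (i + j).+1) => _ H0; apply: H0 => //.
  by rewrite ltnS leq_addr.
by rewrite ltnS leq_addl.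
Qed.

End Ortho.

Section Pad.
Variable k : fieldType.

Definition padf n (c : 'I_n -> k) (i : nat) : k :=
  match (insub i : option 'I_n) with Some j => c j | None => 0 end.

Lemma padfE n (c : 'I_n -> k) (i : 'I_n) : padf c i = c i.
Proof. by rewrite /padf valK. Qed.

Lemma padf_out n (c : 'I_n -> k) i : (n <= i)%N -> padf c i = 0.
Proof. by move=> h; rewrite /padf insubN // -leqNgt. Qed.

Lemma padsum (X : lmodType k) n N (c : 'I_n -> k) (f : nat -> X) :
  (n <= N)%N -> \sum_(i < N) padf c i *: f i = \sum_(i < n) c i *: f i.
Proof.
move=> nN; transitivity (\sum_(i < n) padf c i *: f i); last first.
  by apply eq_bigr => i _; rewrite padfE.
symmetry; rewrite (big_ord_widen N (fun i => padf c i *: f i)) // big_mkcond.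
apply eq_bigr => i _; case: ltnP => // h; by rewrite padf_out // scale0r.
Qed.

Lemma sum_recr (X : lmodType k) n (c : 'I_n.+1 -> k) (f : nat -> X) :
  \sum_(i < n.+1) c i *: f i =
  \sum_(i < n) c (widen_ord (leqnSn n) i) *: f i + c ord_max *: f n.
Proof. by rewrite big_ord_recr. Qed.

Lemma sum_recr_if (X : lmodType k) n (c : 'I_n.+1 -> k) (f : nat -> X) x :
  \sum_(i < n.+1) c i *: (if (i < n)%N then f i else x) =
  \sum_(i < n) c (widen_ord (leqnSn n) i) *: f i + c ord_max *: x.
Proof.
rewrite big_ord_recr /= ltnn; congr (_ + _).
by apply eq_bigr => i _; rewrite /= ltn_ord.
Qed.

End Pad.

Section Main.
Variables (k : closedFieldType) (V W : lmodType k) (B : V -> V -> k) (B' : W -> W -> k).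
Hypothesis HB : qs_bilinear_form B.
Hypothesis HB' : qs_bilinear_form B'.
Hypothesis H2 : (2:k) != 0.
Variable v : nat -> V.
Hypothesis Hv1 : forall i, B (v i) (v i) = 1.
Hypothesis Hv0 : forall i j, i != j -> bet B (v i) (v j) = 0.
Variable e : nat -> W.

Local Notation bV := (bet B).
Local Notation bW := (bet B').

Definition inspan N y := y = \sum_(j < N) (bV y (v j) / 2) *: v j.

Lemma kronv N (t : nat -> k) j : (j < N)%N -> bV (\sum_(l < N) t l *: v l) (v j) = t j * 2.
Proof. by move=> jN; apply: kron => // i l _ _; apply: Hv0. Qed.

Lemma kronv0 N (t : nat -> k) j : (N <= j)%N -> bV (\sum_(l < N) t l *: v l) (v j) = 0.
Proof.
move=> Nj; rewrite bet_suml // big1 // => l _; rewrite Hv0 ?mulr0 //.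
by rewrite neq_ltn (leq_trans (ltn_ord l) Nj).
Qed.

Lemma span_sum N (t : nat -> k) : inspan N (\sum_(l < N) t l *: v l).
Proof.
rewrite /inspan; apply eq_bigr => l _; by rewrite kronv // mulfK.
Qed.

Lemma span_sum' N (t : 'I_N -> k) : inspan N (\sum_(l < N) t l *: v l).
Proof.
have -> : \sum_(l < N) t l *: v l = \sum_(l < N) padf t l *: v l.
  by apply eq_bigr => l _; rewrite padfE.
exact: span_sum.
Qed.

Lemma inspan_mono N M y : inspan N y -> (N <= M)%N -> inspan M y.
Proof.
move=> Hy NM; rewrite Hy.
have -> : \sum_(j < N) (bV y (v j) / 2) *: v j =
          \sum_(j < M) (if (j < N)%N then bV y (v j) / 2 else 0) *: v j.
  symmetry; rewrite (big_ord_widen M (fun j => (bV y (v j) / 2) *: v j)) // [RHS]big_mkcond.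
  by apply eq_bigr => j _; case: ifP => // _; rewrite scale0r.
exact: (@span_sum M (fun j => if (j < N)%N then bV y (v j) / 2 else 0)).
Qed.

Lemma span_comb N n (p : nat -> V) (c : 'I_n -> k) :
  (forall i, (i < n)%N -> inspan N (p i)) -> inspan N (\sum_(i < n) c i *: p i).
Proof.
move=> H.
rewrite (eq_bigr (fun i : 'I_n => c i *: \sum_(j < N) (bV (p i) (v j) / 2) *: v j)); last first.
  by move=> i _; rewrite -(H i (ltn_ord i)).
rewrite (eq_bigr (fun i : 'I_n => \sum_(j < N) (c i * (bV (p i) (v j) / 2)) *: v j)); last first.
  by move=> i _; rewrite scaler_sumr; apply eq_bigr => j _; rewrite scalerA.
rewrite exchange_big /=.
rewrite (eq_bigr (fun j : 'I_N => (\sum_(i < n) c i * (bV (p i) (v j) / 2)) *: v j)); last first.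
  by move=> j _; rewrite scaler_suml.
exact: span_sum'.
Qed.

Lemma inspan_zero N y : inspan N y -> (forall j, (j < N)%N -> bV y (v j) = 0) -> y = 0.
Proof.
move=> Hy H0; rewrite Hy big1 // => j _; by rewrite H0 ?mul0r ?scale0r.
Qed.

Lemma inspan_orth N y j : inspan N y -> (N <= j)%N -> bV y (v j) = 0.
Proof. by move=> Hy Nj; rewrite Hy (@kronv0 N (fun j => bV y (v j) / 2)). Qed.

Definition Inv n (p : nat -> V) :=
  (forall i, (i < n)%N -> inspan (2 * n) (p i)) /\
  (forall i j, (i < n)%N -> (j < n)%N -> bV (p i) (p j) = bW (e i) (e j)) /\
  (forall c : 'I_n -> k, \sum_(i < n) c i *: p i = 0 <-> \sum_(i < n) c i *: e i = 0).

Lemma Inv0 : Inv 0 (fun _ => 0).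
Proof. by split; [|split] => // c; rewrite !big_ord0. Qed.

Lemma Inv_ext n p p' : (forall i, (i < n)%N -> p i = p' i) -> Inv n p -> Inv n p'.
Proof.
move=> E [Ha [Hb Hc]]; split; [|split].
- by move=> i im; rewrite -E //; apply: Ha.
- by move=> i j im jm; rewrite -!E //; apply: Hb.
- move=> c; rewrite -Hc; suff -> : \sum_(i < n) c i *: p' i = \sum_(i < n) c i *: p i by [].
  by apply eq_bigr => i _; rewrite E.
Qed.

Lemma bvv i : bV (v i) (v i) = 2.
Proof. by rewrite /bet Hv1. Qed.


Lemma step n p : Inv n p -> exists x, Inv n.+1 (fun i => if (i < n)%N then p i else x).
Proof.
move=> [Ha [Hb Hc]].
case: (classic (exists d : 'I_n -> k, e n = \sum_(i < n) d i *: e i)) => [[d Hd]|nd].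
  pose x := \sum_(i < n) d i *: p i.
  have bx : forall j, (j < n)%N -> bV x (p j) = bW (e n) (e j).
    move=> j jn; rewrite bet_suml // Hd bet_suml //.
    by apply eq_bigr => i _; rewrite Hb.
  exists x; split; [|split].
  - move=> i /ltS_cases [im|->]; [rewrite im | rewrite ltnn].
      by apply: (inspan_mono (Ha i im)); lia.
    by apply: (inspan_mono (span_comb _ Ha)); lia.
  - move=> i j /ltS_cases [im|->] /ltS_cases [jm|->]; rewrite ?ltnn ?im ?jm.
    + exact: Hb.
    + by rewrite betC bx // betC.
    + exact: bx.
    + rewrite bet_sumr // [X in _ = bW _ X]Hd bet_sumr //.
      by apply eq_bigr => l _; rewrite bx.
  - move=> c; rewrite sum_recr_if sum_recr.
    have E1 : \sum_(i < n) c (widen_ord (leqnSn n) i) *: p i + c ord_max *: x =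
      \sum_(i < n) (c (widen_ord (leqnSn n) i) + c ord_max * d i) *: p i.
      rewrite /x scaler_sumr -big_split; apply eq_bigr => i _.
      by rewrite scalerDl scalerA.
    have E2 : \sum_(i < n) c (widen_ord (leqnSn n) i) *: e i + c ord_max *: e n =
      \sum_(i < n) (c (widen_ord (leqnSn n) i) + c ord_max * d i) *: e i.
      rewrite Hd scaler_sumr -big_split; apply eq_bigr => i _.
      by rewrite scalerDl scalerA.
    by rewrite E1 E2.
pose G : 'M[k]_(n, 2 * n) := \matrix_(i, j) bV (p i) (v j).
pose F : 'rV[k]_n := \row_i bW (e n) (e i).
have HF : (F <= G^T)%MS.
  rewrite submxE; apply/eqP/matrixP => a j; rewrite !mxE.
  set K := cokermx G^T.
  have HK : \sum_(i < n) K i j *: p i = 0.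
    apply: (@inspan_zero (2 * n)); first by apply: span_comb => i im; apply: Ha.
    move=> l ln; rewrite bet_suml //.
    have E := congr1 (fun M : 'M[k]_(2 * n, n) => M (Ordinal ln) j) (mulmx_coker G^T).
    rewrite /= !mxE in E; rewrite -[RHS]E.
    by apply eq_bigr => i _; rewrite !mxE mulrC.
  have HE := proj1 (Hc (fun i => K i j)) HK.
  transitivity (bW (e n) (\sum_(i < n) K i j *: e i)).
    by rewrite bet_sumr //; apply eq_bigr => i _; rewrite !mxE mulrC.
  by rewrite HE; apply: (linf0 (bet_linr HB' _)).
have [s Hs] := submxP HF.
pose y := \sum_(j < 2 * n) s ord0 j *: v j.
have Hyp : forall i, (i < n)%N -> bV y (p i) = bW (e n) (e i).
  move=> i im; have := congr1 (fun M : 'rV[k]_n => M ord0 (Ordinal im)) Hs; rewrite !mxE => ->.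
  by rewrite /y bet_suml //; apply eq_bigr => j _; rewrite !mxE betC.
have yspan : inspan (2 * n) y by apply: span_sum'.
have [iota Hi] := imaginary_exists k.
pose c0 := B' (e n) (e n) - B y y.
pose a := (c0 + 1) / 2.
pose b := iota * ((c0 - 1) / 2).
have ab : a ^+ 2 + b ^+ 2 = c0.
  rewrite /b !exprMn Hi mulN1r /a; field; exact: H2.
have abnz : (a != 0) || (b != 0).
  case: (a =P 0) => //= a0; apply/eqP => b0.
  move: ab; rewrite a0 b0 expr0n /= addr0 => c00.
  by move: a0; rewrite /a -c00 add0r; apply/eqP; rewrite mulf_neq0 ?oner_eq0 ?invr_eq0.
pose x := y + a *: v (2 * n) + b *: v (2 * n).+1.
have bxv : forall j, bV x (v j) =
   bV y (v j) + a * bV (v (2 * n)) (v j) + b * bV (v (2 * n).+1) (v j).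
  by move=> j; rewrite /x !betDl // !betZl.
have bxlow : forall j, (j < 2 * n)%N -> bV x (v j) = bV y (v j).
  move=> j jn; rewrite bxv !Hv0 ?mulr0 ?addr0 //; rewrite neq_ltn; apply/orP; right; lia.
have yo : forall j, (2 * n <= j)%N -> bV y (v j) = 0.
  by move=> j jn; apply: (inspan_orth yspan).
have bx2n : bV x (v (2 * n)) = a * 2.
  by rewrite bxv yo // bvv // Hv0 ?mulr0 ?addr0 ?add0r //; rewrite neq_ltn ltnSn orbT.
have bx2n1 : bV x (v (2 * n).+1) = b * 2.
  by rewrite bxv yo // bvv // Hv0 ?mulr0 ?addr0 ?add0r //; rewrite neq_ltn ltnSn.
have bxp : forall i, (i < n)%N -> bV x (p i) = bW (e n) (e i).
  move=> i im; rewrite /x !betDl // !betZl // Hyp //.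
  rewrite !(betC _ _ (p i)) !(inspan_orth (Ha i im)) ?mulr0 ?addr0 //; lia.
have Bxx : B x x = B' (e n) (e n).
  rewrite /x !BD // !BZ // !Hv1 !betDl // !betZl // !(betZr HB) !yo //.
  rewrite Hv0 ?neq_ltn ?ltnSn // -/c0.
  rewrite !mulr0 !addr0 !mulr1 -addrA ab /c0; ring.
exists x; split; [|split].
- move=> i /ltS_cases [im|->]; [rewrite im | rewrite ltnn].
    by apply: (inspan_mono (Ha i im)); lia.
  rewrite /inspan.
  have -> : (2 * n.+1 = (2 * n).+2)%N by lia.
  rewrite !big_ord_recr /= bx2n bx2n1 !mulfK //.
  congr (_ + _ + _).
  rewrite {1}yspan; apply eq_bigr => j _; rewrite /= bxlow //.
- move=> i j /ltS_cases [im|->] /ltS_cases [jm|->]; rewrite ?ltnn ?im ?jm.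
  + exact: Hb.
  + by rewrite betC bxp // betC.
  + exact: bxp.
  + by rewrite /bet Bxx.
- move=> c; clearbody x a b; rewrite sum_recr_if sum_recr; split => Hz.
    have cn0 : c ord_max = 0.
      have h1 := congr1 (fun z => bV z (v (2 * n))) Hz.
      have h2 := congr1 (fun z => bV z (v (2 * n).+1)) Hz.
      move: h1 h2 => /=; rewrite !betDl // !betZl // bx2n bx2n1 !bet_suml // !bet0l //.
      rewrite !big1 => [|i _|i _]; last first.
      + by rewrite (inspan_orth (Ha i (ltn_ord i))) ?mulr0 //; lia.
      + by rewrite (inspan_orth (Ha i (ltn_ord i))) ?mulr0 //; lia.
      rewrite !add0r => h1 h2; apply/eqP.
      case/orP: abnz => nz; [move: h1 | move: h2]; rewrite mulrA => /eqP;
        by rewrite !mulf_eq0 (negbTE H2) (negbTE nz) !orbF.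
    move: Hz; rewrite cn0 !scale0r !addr0 => Hz.
    by apply/Hc.
  have cn0 : c ord_max = 0.
    case: (c ord_max =P 0) => // /eqP cn; exfalso; apply: nd.
    exists (fun i => - (c ord_max)^-1 * c (widen_ord (leqnSn n) i)).
    have E : c ord_max *: e n = - \sum_(i < n) c (widen_ord (leqnSn n) i) *: e i.
      by apply/eqP; rewrite -addr_eq0 addrC Hz.
    apply: (scalerI cn); rewrite E scaler_sumr -sumrN; apply eq_bigr => i _.
    by rewrite scalerA mulrA mulrN mulfV // mulN1r scaleNr.
  move: Hz; rewrite cn0 !scale0r !addr0 => Hz.
  by apply/Hc.
Qed.
End Main.

Theorem proposition2p4 (k : closedFieldType) (V W : lmodType k)
    (q : V -> k) (q' : W -> k) :
  (2 \notin [pchar k])%N ->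
  qs_quadratic q -> qs_nondegenerate q ->
  qs_quadratic q' -> qs_countable_dim W ->
  exists phi : {linear W -> V}, forall w : W, q (phi w) = q' w.
Proof.
move=> H2c [B [HB Hq]] Hnd [B' [HB' Hq']] [e He].
have H2 : (2:k) != 0 by rewrite (natf_neq0_pchar k 2) pnatE.
have [v [Hv1 Hv0]] := ortho_seq HB H2 Hq Hnd.
have [p Hp] : exists p : nat -> V, forall n, Inv B B' v e n p.
  apply: (@rec_choice V 0 (Inv B B' v e)).
  - exact: Inv0.
  - by move=> n p; apply: step.
  - by move=> n p p'; apply: Inv_ext.
have Hrep : forall w, exists nc : {n : nat & 'I_n -> k},
    w = \sum_(i < projT1 nc) projT2 nc i *: e i.
  by move=> w; have [n [c E]] := He w; exists (existT _ n c).
pose R w := epsilon (inhabits (existT (fun n => 'I_n -> k) 0%N (fun _ => 0)))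
  (fun nc : {n : nat & 'I_n -> k} => w = \sum_(i < projT1 nc) projT2 nc i *: e i).
have HR : forall w, w = \sum_(i < projT1 (R w)) projT2 (R w) i *: e i.
  by move=> w; exact: (epsilon_spec _ _ (Hrep w)).
pose f w := \sum_(i < projT1 (R w)) projT2 (R w) i *: p i.
have WD : forall n (c : 'I_n -> k) n' (c' : 'I_n' -> k),
    \sum_(i < n) c i *: e i = \sum_(i < n') c' i *: e i ->
    \sum_(i < n) c i *: p i = \sum_(i < n') c' i *: p i.
  move=> n c n' c' E.
  have Hpad : forall (X : lmodType k) (g : nat -> X),
      \sum_(i < n + n') (padf c i - padf c' i) *: g i =
      \sum_(i < n) c i *: g i - \sum_(i < n') c' i *: g i.
    move=> X g.
    rewrite (eq_bigr (fun i : 'I_(n + n') => padf c i *: g i - padf c' i *: g i)).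
      by rewrite sumrB !padsum // ?leq_addl ?leq_addr.
    by move=> i _; rewrite scalerBl.
  have [_ [_ Hc]] := Hp (n + n')%N.
  have := proj2 (Hc (fun i => padf c i - padf c' i)).
  rewrite !Hpad E subrr => /(_ erefl) /eqP; rewrite subr_eq0 => /eqP.
  done.
have comb : forall (X : lmodType k) (g : nat -> X) a n1 (c1 : 'I_n1 -> k) n2 (c2 : 'I_n2 -> k),
    \sum_(i < n1 + n2) (a * padf c1 i + padf c2 i) *: g i =
    a *: \sum_(i < n1) c1 i *: g i + \sum_(i < n2) c2 i *: g i.
  move=> X g a n1 c1 n2 c2.
  rewrite (eq_bigr (fun i : 'I_(n1 + n2) => a *: (padf c1 i *: g i) + padf c2 i *: g i)).
    by rewrite big_split /= -scaler_sumr !padsum // ?leq_addl ?leq_addr.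
  by move=> i _; rewrite scalerDl scalerA.
have flin : forall a u w, f (a *: u + w) = a *: f u + f w.
  move=> a u w; rewrite /f.
  rewrite -(comb V p a _ (projT2 (R u)) _ (projT2 (R w))).
  apply: WD; rewrite comb -!HR; done.
exists (mkLin flin) => w /=.
rewrite Hq Hq' /f.
set n := projT1 (R w); set c := projT2 (R w).
have Ew : w = \sum_(i < n) c i *: e i := HR w.
rewrite {1 2}Ew.
have [_ [Hb _]] := Hp n.
apply: (cancel2 H2).
change (bet B (\sum_(i < n) c i *: p i) (\sum_(i < n) c i *: p i) =
        bet B' (\sum_(i < n) c i *: e i) (\sum_(i < n) c i *: e i)).
rewrite !bet_suml //; apply eq_bigr => i _; rewrite !bet_sumr //; congr (_ * _).
by apply eq_bigr => j _; rewrite Hb.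
Qed.
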